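(* There is a universal constant $C$ such that for every $K$, $T$, every sequence of multiclass outcomes $\mathbf x\in[K]^T$ fixed in advance, and every bounded proper multiclass scoring rule $\ell\in\mathcal L$, the forecasts $\mathbf p$ produced by ForecastFTPL satisfy $\mathbb E[\mathrm{Reg}_\ell(\mathbf p,\mathbf x)]\le CK\sqrt T$, i.e. $O(K\sqrt T)$.
   Context: ForecastFTPL: for $t=1,\dots,T$: for each $i\in[K]$ sample $n_{t,i}$ independently and uniformly from $\{0,1,\dots,\lfloor\sqrt T\rfloor\}$; set $\hat X_{t,i}=n_{t,i}+\sum_{s=1}^{t-1}\mathbf 1(x_s=i)$; output $p_t\in\Delta_K$ with $p_{t,i}=\hat X_{t,i}/\sum_{j=1}^K\hat X_{t,j}$ (if the denominator is $0$, output an arbitrary fixed element of $\Delta_K$); then observe $x_t$. Here $\Delta_K$ is the probability simplex in $\mathbb R^K$, outcome $i$ identified with $e_i$. A multiclass scoring rule $\ell:\Delta_K\times[K]\to\mathbb R$, with $\ell(p;q)=\sum_iq_i\ell(p,i)$, is proper if $\ell(p;p)\le\ell(p';p)$ for all $p,p'$; $\mathcal L$ is the set of proper ones with values in $[-1,1]$. With $\beta=\frac1T\sum_te_{x_t}$, $\mathrm{Reg}_\ell(\mathbf p,\mathbf x)=\sum_t\ell(p_t,x_t)-\sum_t\ell(\beta,x_t)$. *)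

(* Defs.v *)
From mathcomp Require Import all_boot all_order all_algebra.
From mathcomp Require Import reals.
Set Implicit Arguments. Unset Strict Implicit. Unset Printing Implicit Defensive.
Import Order.TTheory GRing.Theory Num.Theory.
Local Open Scope ring_scope.

Section Defs.
Variable R : realType.

(* The probability simplex Delta_K; outcome i is identified with e_i. *)
Definition in_simplex (K : nat) (p : {ffun 'I_K -> R}) : Prop :=
  (forall i, 0 <= p i) /\ \sum_(i < K) p i = 1.

Definition score_exp (K : nat) (l : {ffun 'I_K -> R} -> 'I_K -> R)
  (p q : {ffun 'I_K -> R}) : R := \sum_(i < K) q i * l p i.

Definition proper (K : nat) (l : {ffun 'I_K -> R} -> 'I_K -> R) : Prop :=
  forall p p', in_simplex p -> in_simplex p' ->
    score_exp l p p <= score_exp l p' p.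

Definition bounded_proper (K : nat) (l : {ffun 'I_K -> R} -> 'I_K -> R) : Prop :=
  proper l /\ forall p i, in_simplex p -> -1 <= l p i <= 1.

Definition sqrtT (T : nat) : nat := Nat.sqrt T.

Definition noise (T K : nat) := {ffun 'I_T * 'I_K -> 'I_(sqrtT T).+1}.

Definition cnt (T K : nat) (x : 'I_T -> 'I_K) (t : nat) (i : 'I_K) : nat :=
  \sum_(s < T | (s < t)%N) (x s == i).

Definition Xhat (T K : nat) (x : 'I_T -> 'I_K) (n : noise T K) (t : 'I_T)
  (i : 'I_K) : nat := (n (t, i) + cnt x t i)%N.

Definition ftpl_forecast (T K : nat) (p0 : {ffun 'I_K -> R})
  (x : 'I_T -> 'I_K) (n : noise T K) (t : 'I_T) : {ffun 'I_K -> R} :=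
  let D := \sum_(j < K) Xhat x n t j in
  if D == 0%N then p0 else [ffun i => (Xhat x n t i)%:R / D%:R].

Definition beta (T K : nat) (x : 'I_T -> 'I_K) : {ffun 'I_K -> R} :=
  [ffun i => (\sum_(t < T) (x t == i))%:R / T%:R].

Definition regret (T K : nat) (l : {ffun 'I_K -> R} -> 'I_K -> R)
  (p : 'I_T -> {ffun 'I_K -> R}) (x : 'I_T -> 'I_K) : R :=
  \sum_(t < T) l (p t) (x t) - \sum_(t < T) l (beta x) (x t).

(* Expected regret of ForecastFTPL: the n_{t,i} are independent and uniform,
   so the expectation is the uniform average over all noise arrays. *)
Definition exp_regret_ftpl (T K : nat) (p0 : {ffun 'I_K -> R})
  (l : {ffun 'I_K -> R} -> 'I_K -> R) (x : 'I_T -> 'I_K) : R :=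
  (\sum_(n : noise T K) regret l (ftpl_forecast p0 x n) x)
    / #|{: noise T K}|%:R.

End Defs.

(* Main.v *)
Require Import Defs.
From mathcomp Require Import all_boot all_order all_algebra all_fingroup.
From mathcomp Require Import reals.
From mathcomp Require Import lra.
From Stdlib Require Import PeanoNat FunctionalExtensionality.
Set Implicit Arguments. Unset Strict Implicit. Unset Printing Implicit Defensive.
Import Order.TTheory GRing.Theory Num.Theory.
Local Open Scope ring_scope.

Lemma real_fin (R : realType) (K T m : nat) : (0 < K)%N -> (m * m <= T)%N ->
  (T < m.+1 * m.+1)%N ->
  T%:R * (2 / (m.+1)%:R) + 2 * (K * m)%:R <= 4 * K%:R * Num.sqrt (T%:R : R).
Proof.
move=> Kpos h1 h2.
set s := Num.sqrt (T%:R : R).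
have s0 : 0 <= s by apply: sqrtr_ge0.
have ss : s * s = T%:R by rewrite -expr2 sqr_sqrtr ?ler0n.
have ms : (m%:R : R) <= s.
  by rewrite -(ger0_norm (ler0n _ m)) -sqrtr_sqr ler_sqrt ?ler0n // -natrX ler_nat expnS expn1.
have sm : s <= (m.+1)%:R.
  have h2' : (T%:R : R) < (m.+1)%:R * (m.+1)%:R by rewrite -natrM ltr_nat.
  have m0 : (0 : R) <= (m.+1)%:R by apply: ler0n.
  move: h2'; rewrite -ss; move: (m.+1)%:R m0 => a a0 h.
  nra.
have K1 : (1 : R) <= K%:R by rewrite ler1n.
have hT2 : T%:R * (2 / (m.+1)%:R) <= 2 * s.
  rewrite -ss mulrCA mulrA ler_pdivrMr ?ltr0n // -mulrA ler_wpM2l //.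
  by rewrite mulrC ler_wpM2l.
rewrite natrM.
have : K%:R * m%:R <= K%:R * s :> R by rewrite ler_wpM2l ?ler0n.
have : 2 * s <= 2 * (K%:R * s) :> R.
  by rewrite ler_wpM2l // -[X in X <= _]mul1r ler_wpM2r.
move: hT2; rewrite -mulrA.
move: (K%:R * s) (K%:R * m%:R : R) (T%:R * (2 / (m.+1)%:R) : R) => A A' Z.
lra.
Qed.

Section Proof.
Variables (R : realType) (K T : nat) (x : 'I_T -> 'I_K)
  (l : {ffun 'I_K -> R} -> 'I_K -> R) (p0 : {ffun 'I_K -> R}).
Hypotheses (hp0 : in_simplex p0) (hl : bounded_proper l).

Lemma big_ltS (A : Type) (idx : A) (op : Monoid.com_law idx) t (ht : (t < T)%N)
  (F : 'I_T -> A) :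
  \big[op/idx]_(s < T | (s < t.+1)%N) F s
  = op (\big[op/idx]_(s < T | (s < t)%N) F s) (F (Ordinal ht)).
Proof.
rewrite (bigD1 (Ordinal ht)) //= Monoid.mulmC; congr (op _ _).
by apply: eq_bigl => s; rewrite ltnS -val_eqE /= andbC -ltn_neqAle.
Qed.

Lemma cnt0 i : cnt x 0 i = 0%N.
Proof. by rewrite /cnt big1 // => s; rewrite ltn0. Qed.

Lemma cntS (t : 'I_T) i : cnt x t.+1 i = (cnt x t i + (x t == i))%N.
Proof.
rewrite /cnt (big_ltS _ (ltn_ord t)).
by have -> : Ordinal (ltn_ord t) = t by apply: val_inj.
Qed.

Definition Gc (c : 'I_K -> nat) : {ffun 'I_K -> R} :=
  if (\sum_(j < K) c j)%N == 0%N then p0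
  else [ffun i => (c i)%:R / (\sum_(j < K) c j)%:R].
Definition G (t : nat) (w : 'I_K -> nat) := Gc (fun j => (w j + cnt x t j)%N).
Definition row (t : 'I_T) (n : noise T K) : 'I_K -> nat :=
  fun j => nat_of_ord (n (t, j)).
Definition addE (w : 'I_K -> nat) (i : 'I_K) : 'I_K -> nat :=
  fun j => (w j + (i == j))%N.

Lemma ftplE n t : ftpl_forecast p0 x n t = G t (row t n).
Proof. by []. Qed.

Lemma Gc_simplex c : in_simplex (Gc c).
Proof.
rewrite /Gc; case: eqP => [_|hD] //; split.
- by move=> i; rewrite ffunE; apply: divr_ge0; apply: ler0n.
- under eq_bigr do rewrite ffunE.
  rewrite -mulr_suml -natr_sum mulfV // pnatr_eq0; exact/eqP.
Qed.

Lemma G_shift (t : 'I_T) w : G t (addE w (x t)) = G t.+1 w.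
Proof.
rewrite /G; congr Gc; apply: functional_extensionality => j.
by rewrite /addE cntS addnAC addnA.
Qed.

Definition L t w p := \sum_(i < K) ((w i + cnt x t i)%:R : R) * l p i.

Lemma G_min t w p : in_simplex p -> L t w (G t w) <= L t w p.
Proof.
move=> hp; rewrite /L /G /Gc.
case: eqP => [hD|hD].
  have c0 : forall i, (w i + cnt x t i)%N = 0%N.
    move=> i; apply/eqP; rewrite -leqn0 -hD.
    by rewrite (bigD1 i) //= leq_addr.
  by rewrite !big1 // => i _; rewrite c0 mul0r.
set D := (\sum_(j < K) _)%N.
set q := [ffun i => _].
have E : forall p', \sum_(i < K) ((w i + cnt x t i)%:R : R) * l p' i
    = D%:R * score_exp l p' q.
  move=> p'; rewrite /score_exp mulr_sumr; apply: eq_bigr => i _.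
  rewrite ffunE mulrA; congr (_ * _); rewrite mulrC divfK // pnatr_eq0; exact/eqP.
rewrite !E; apply: ler_wpM2l; first exact: ler0n.
apply: hl.1 => //.
have := Gc_simplex (fun j => (w j + cnt x t j)%N).
by rewrite /Gc; case: eqP.
Qed.

Lemma L_step t w p (ht : (t < T)%N) :
  L t.+1 w p = L t w p + l p (x (Ordinal ht)).
Proof.
rewrite /L.
have cS i : cnt x t.+1 i = (cnt x t i + (x (Ordinal ht) == i))%N :=
  cntS (Ordinal ht) i.
under eq_bigr do rewrite cS addnA natrD mulrDl.
rewrite big_split /=; congr (_ + _).
rewrite (bigD1 (x (Ordinal ht))) //= eqxx mul1r big1 ?addr0 // => j hj.
by rewrite eq_sym (negbTE hj) mul0r.
Qed.

Lemma L_sum t w p : (t <= T)%N ->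
  L t w p = L 0 w p + \sum_(s < T | (s < t)%N) l p (x s).
Proof.
elim: t => [_|t IH ht]; first by rewrite big1 ?addr0 // => s; rewrite ltn0.
by rewrite (L_step _ _ ht) (IH (ltnW ht)) (big_ltS _ ht) addrA.
Qed.

Lemma L0_bound w p : in_simplex p ->
  - (\sum_(i < K) w i)%:R <= L 0 w p <= (\sum_(i < K) w i)%:R.
Proof.
move=> hp; rewrite /L natr_sum -sumrN; apply/andP; split; apply: ler_sum => i _;
  rewrite cnt0 addn0; have /andP[h1 h2] := hl.2 p i hp.
- by rewrite -mulrN1; apply: ler_wpM2l => //; apply: ler0n.
- by rewrite -[X in _ <= X]mulr1; apply: ler_wpM2l => //; apply: ler0n.
Qed.

Lemma beta_simplex : (0 < T)%N -> in_simplex (beta R x).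
Proof.
move=> hT; split.
- by move=> i; rewrite ffunE; apply: divr_ge0; apply: ler0n.
- under eq_bigr do rewrite ffunE.
  rewrite -mulr_suml -natr_sum exchange_big /=.
  have -> : (\sum_(j < T) \sum_(i < K) (x j == i) = \sum_(j < T) 1)%N.
    apply: eq_bigr => j _; rewrite (bigD1 (x j)) //= eqxx big1 ?addn0 // => i hi.
    by rewrite eq_sym (negbTE hi).
  rewrite sum1_card card_ord mulfV // pnatr_eq0 -lt0n //.
Qed.

Lemma BTL w : (0 < T)%N ->
  \sum_(s < T) l (G s.+1 w) (x s)
  <= \sum_(s < T) l (beta R x) (x s) + 2 * (\sum_(i < K) w i)%:R.
Proof.
move=> hT.
have P : forall t, (t <= T)%N ->
    \sum_(s < T | (s < t)%N) l (G s.+1 w) (x s) + L 0 w (G 0 w) <= L t w (G t w).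
  elim=> [_|t IH ht].
    by rewrite big1 ?add0r // => s; rewrite ltn0.
  rewrite (big_ltS _ ht) -addrAC.
  apply: le_trans (lerD (IH (ltnW ht)) (lexx _)) _.
  rewrite (L_step _ _ ht) lerD2r /=.
  by apply: G_min; apply: Gc_simplex.
have := P T (leqnn T).
have e : forall F : 'I_T -> R, \sum_(s < T | (s < T)%N) F s = \sum_(s < T) F s.
  by move=> F; apply: eq_bigl => s; rewrite ltn_ord.
rewrite e => H1.
have H2 := G_min T w (beta_simplex hT).
rewrite [X in _ <= X](L_sum _ _ (leqnn T)) e in H2.
have := L0_bound w (beta_simplex hT).
have := L0_bound w (Gc_simplex (fun j => (w j + cnt x 0 j)%N)).
rewrite /G in H1 H2 *.
move=> /andP[a1 a2] /andP[b1 b2].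
lra.
Qed.

Lemma swap_sum (h : ('I_K -> nat) -> R) (t t0 : 'I_T) :
  \sum_(n : noise T K) h (row t n) = \sum_(n : noise T K) h (row t0 n).
Proof.
pose sw (n : noise T K) : noise T K := [ffun p => n (tperm t t0 p.1, p.2)].
have swK : involutive sw.
  by move=> n; apply/ffunP => p; rewrite !ffunE /= tpermK; case: p.
rewrite [RHS](reindex_inj (inv_inj swK)) /=; apply: eq_bigr => n _.
congr h; apply: functional_extensionality => j.
by rewrite /row ffunE /= tpermR.
Qed.


Lemma stab (h : ('I_K -> nat) -> R) (t0 : 'I_T) (i : 'I_K) :
  (forall w, -1 <= h w <= 1) ->
  \sum_(n : noise T K) (h (row t0 n) - h (addE (row t0 n) i))
  <= 2 * (#|{: noise T K}|%:R / (sqrtT T).+1%:R).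
Proof.
move=> hb.
set m := sqrtT T.
pose e := (t0, i).
pose st (n : noise T K) (a : 'I_m.+1) : noise T K :=
  [ffun p => if p == e then a else n p].
have decomp : forall F : noise T K -> R,
    \sum_(n : noise T K) F n = \sum_(n : noise T K | n e == ord0) \sum_(a < m.+1) F (st n a).
  move=> F.
  rewrite (partition_big (fun n : noise T K => n e) xpredT) //=.
  rewrite [RHS]exchange_big /=; apply: eq_bigr => a _.
  rewrite (reindex_onto (fun n => st n a) (fun n => st n ord0)) /=.
    apply: eq_bigl => n; rewrite ffunE !eqxx /=.
    apply/eqP/eqP => [<-|h0]; first by rewrite ffunE eqxx.
    apply/ffunP => p; rewrite !ffunE; case: (p =P e) => [->|//].
    by rewrite h0.
  move=> n /eqP ha; apply/ffunP => p; rewrite !ffunE.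
  by case: (p =P e) => [->|//]; rewrite ha.
pose v (n : noise T K) (k : nat) : 'I_K -> nat :=
  fun j => if j == i then k else nat_of_ord (n (t0, j)).
have rowst n a : row t0 (st n a) = v n a.
  apply: functional_extensionality => j; rewrite /row /v ffunE xpair_eqE eqxx /=.
  by case: (j == i).
have addv n k : addE (v n k) i = v n k.+1.
  apply: functional_extensionality => j; rewrite /addE /v.
  case: (j =P i) => [->|/eqP hj]; first by rewrite eqxx addn1.
  by rewrite eq_sym (negbTE hj) addn0.
have cardE : (#|{: noise T K}|%:R : R) = \sum_(n : noise T K | n e == ord0) (m.+1)%:R.
  rewrite -sumr_const decomp; apply: eq_bigr => n _.
  by rewrite sumr_const card_ord.
rewrite decomp.
apply: le_trans (_ : \sum_(n : noise T K | n e == ord0) (2 : R) <= _).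
  apply: ler_sum => n _.
  under eq_bigr do rewrite rowst addv.
  rewrite -(big_mkord xpredT (fun k => h (v n k) - h (v n k.+1))).
  have -> : \sum_(0 <= k < m.+1) (h (v n k) - h (v n k.+1))
      = - \sum_(0 <= k < m.+1) (h (v n k.+1) - h (v n k)).
    by rewrite -sumrN; apply: eq_bigr => k _; rewrite opprB.
  rewrite telescope_sumr //.
  have /andP[a1 a2] := hb (v n m.+1); have /andP[b1 b2] := hb (v n 0).
  lra.
rewrite cardE mulr_suml mulr_sumr; apply: ler_sum => n _.
by rewrite mulfV ?mulr1 // pnatr_eq0.
Qed.


Lemma main_bound : (0 < T)%N ->
  exp_regret_ftpl p0 l x <= 4 * K%:R * Num.sqrt (T%:R).
Proof.
move=> hT.
set m := sqrtT T.
set N := #|{: noise T K}|.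
have Npos : (0 < N)%N.
  by apply/card_gt0P; exists [ffun _ => ord0].
pose t0 := Ordinal hT.
have Kpos : (0 < K)%N by apply: leq_ltn_trans (leq0n _) (ltn_ord (x t0)).
set B := \sum_(t < T) l (beta R x) (x t).
set c : R := 2 * (N%:R / (m.+1)%:R).
have bd : forall (p : {ffun 'I_K -> R}) i, in_simplex p -> -1 <= l p i <= 1.
  by move=> p i hp; apply: hl.2.
have SA : \sum_(n : noise T K) regret l (ftpl_forecast p0 x n) x
    = \sum_(t < T) \sum_(n : noise T K) l (G t (row t0 n)) (x t) - N%:R * B.
  rewrite /regret sumrB; congr (_ - _); last by rewrite sumr_const mulr_natl; congr (_ *+ _); apply: eq_card.
  rewrite exchange_big /=; apply: eq_bigr => t _.
  exact: (swap_sum (fun w => l (G t w) (x t)) t t0).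
have SB : forall t : 'I_T, \sum_(n : noise T K) l (G t (row t0 n)) (x t)
    <= c + \sum_(n : noise T K) l (G t.+1 (row t0 n)) (x t).
  move=> t.
  have := @stab (fun w => l (G t w) (x t)) t0 (x t)
    (fun w => bd _ _ (Gc_simplex _)).
  rewrite sumrB.
  under [X in _ - X <= _ -> _]eq_bigr do rewrite G_shift.
  rewrite -/c; lra.
have SC : forall n : noise T K,
    \sum_(t < T) l (G t.+1 (row t0 n)) (x t) <= B + 2 * (K * m)%:R.
  move=> n; apply: le_trans (BTL (row t0 n) hT) _.
  rewrite lerD2l ler_wpM2l // ler_nat.
  apply: leq_trans (_ : (\sum_(i < K) m <= _)%N).
    by apply: leq_sum => i _; rewrite /row leq_ord.
  by rewrite sum_nat_const card_ord.
have Sfin : \sum_(n : noise T K) regret l (ftpl_forecast p0 x n) x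
    <= N%:R * (T%:R * (2 / (m.+1)%:R) + 2 * (K * m)%:R).
  rewrite SA.
  have H1 : \sum_(t < T) \sum_(n : noise T K) l (G t (row t0 n)) (x t)
      <= \sum_(t < T) (c + \sum_(n : noise T K) l (G t.+1 (row t0 n)) (x t)).
    by apply: ler_sum => t _; apply: SB.
  rewrite big_split /= sumr_const card_ord -mulr_natl [X in _ <= _ + X]exchange_big /= in H1.
  have H2 : \sum_(n : noise T K) \sum_(t < T) l (G t.+1 (row t0 n)) (x t)
      <= \sum_(n : noise T K) (B + 2 * (K * m)%:R).
    by apply: ler_sum => n _; apply: SC.
  have H3 : \sum_(n : noise T K) (B + 2 * (K * m)%:R) = N%:R * (B + 2 * (K * m)%:R).
    by rewrite sumr_const [RHS]mulr_natl; congr (_ *+ _); apply: eq_card.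
  rewrite H3 in H2.
  have H4 : T%:R * c = N%:R * (T%:R * (2 / (m.+1)%:R)).
    by rewrite /c !mulrA; congr (_ * _); rewrite mulrC mulrA.
  rewrite H4 in H1.
  move: H1 H2.
  move: (\sum_(t < T) \sum_(n : noise T K) l (G t (row t0 n)) (x t)).
  move: (\sum_(n : noise T K) \sum_(t < T) l (G t.+1 (row t0 n)) (x t)).
  clear SA SB SC H3 H4; move: (N%:R : R) (T%:R * (2 / (m.+1)%:R)) B ((K * m)%:R : R) => a b d e y z h1 h2.
  have -> : a * (b + 2 * e) = a * b + a * (d + 2 * e) - a * d by rewrite !mulrDr; lra.
  lra.
rewrite /exp_regret_ftpl ler_pdivrMr; last by rewrite ltr0n; exact: Npos.
apply: le_trans Sfin _.
rewrite [X in _ <= X]mulrC; apply: ler_wpM2l; first exact: ler0n.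
have [h1 h2] : (m * m <= T /\ T < m.+1 * m.+1)%N.
  case: (Nat.sqrt_spec' T) => a b.
  by split; [apply/ssrnat.leP | apply/ssrnat.ltP].
exact: real_fin.
Qed.

End Proof.

Theorem theorem5p9 (R : realType) :
  exists C : R, forall (K T : nat) (x : 'I_T -> 'I_K)
    (l : {ffun 'I_K -> R} -> 'I_K -> R) (p0 : {ffun 'I_K -> R}),
    in_simplex p0 -> bounded_proper l ->
    exp_regret_ftpl p0 l x <= C * K%:R * Num.sqrt (T%:R).
Proof.
exists 4 => K T x l p0 hp0 hl.
case: (posnP T) => [T0|Tpos]; last exact: main_bound.
subst T; rewrite /exp_regret_ftpl /regret big1 ?mul0r ?sqrtr0 ?mulr0 //.
by move=> n _; rewrite !big_ord0 subrr.
Qed.
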